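(* Let $A=(A(i,j))_{i,j\in\mathbb{N}}$ be an infinite matrix with entries in $\{0,1\}$ having no identically zero rows, let $(X,\mu)$ be a measure space, and let $\{R_j\}_{j=1}^\infty$ and $\{D_j\}_{j=1}^\infty$ be families of measurable subsets of $X$ such that (a) $\mu(R_i\cap R_j)=0$ for all $i\neq j$; (b) $X\stackrel{\mu\text{-a.e.}}{=}\bigcup_{j=1}^\infty R_j$; (c) $D_i\stackrel{\mu\text{-a.e.}}{=}\bigcup_{j\in\mathbb{N}:A(i,j)=1}R_j$ for every $i$. Then: (1) for all $i,j$, $\mu(R_j\cap D_i)=0$ if $A(i,j)=0$ and $\mu(R_j\setminus D_i)=0$ if $A(i,j)=1$; and (2) for each pair $U,V$ of finite subsets of $\mathbb{N}$ such that $A(U,V,j)=1$ for only finitely many $j$, $$\bigcap_{u\in U}D_u\cap\bigcap_{v\in V}(X\setminus D_v)\stackrel{\mu\text{-a.e.}}{=}\bigcup_{j\in\mathbb{N}:A(U,V,j)=1}R_j.$$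
   Context: For measurable $Y,Z\subseteq X$, $Y\stackrel{\mu\text{-a.e.}}{=}Z$ means $\mu(Y\setminus Z)=0=\mu(Z\setminus Y)$. For finite $U,V\subseteq\mathbb{N}$ and $j\in\mathbb{N}$, $A(U,V,j)=\prod_{u\in U}A(u,j)\prod_{v\in V}(1-A(v,j))$. *)

(* Defs.v *)
From HB Require Import structures.
From mathcomp Require Import all_boot all_order all_algebra.
From mathcomp Require Import all_classical all_reals all_analysis.
Set Implicit Arguments. Unset Strict Implicit. Unset Printing Implicit Defensive.
Import Order.TTheory GRing.Theory Num.Theory.
Local Open Scope ring_scope.
Local Open Scope classical_set_scope.
Local Open Scope ereal_scope.

Definition ae_eq_set (d : measure_display) (T : measurableType d) (R : realType)
  (mu : {measure set T -> \bar R}) (Y Z : set T) : Prop :=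
  mu (Y `\` Z) = 0%E /\ mu (Z `\` Y) = 0%E.

(* A(U,V,j) = prod_{u in U} A(u,j) * prod_{v in V} (1 - A(v,j)) for a 0/1
   matrix A; it equals 1 exactly when this proposition holds (and 0 otherwise). *)
Definition AUV (A : nat -> nat -> bool) (U V : set nat) (j : nat) : Prop :=
  (forall u, U u -> A u j) /\ (forall v, V v -> ~~ A v j).

(* Main.v *)
Require Import Defs.
From HB Require Import structures.
From mathcomp Require Import all_boot all_order all_algebra.
From mathcomp Require Import all_classical all_reals all_analysis.
Import Order.TTheory GRing.Theory Num.Theory.
Local Open Scope ring_scope.
Local Open Scope classical_set_scope.
Local Open Scope ereal_scope.

Lemma negl_cup (d : measure_display) (X : measurableType d) (R : realType)
  (mu : {measure set X -> \bar R}) (P : set nat) (F : nat -> set X) :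
  (forall k, P k -> mu.-negligible (F k)) -> mu.-negligible (\bigcup_(k in P) F k).
Proof.
move=> H.
apply: (@negligibleS _ _ _ _ (\bigcup_k (if pselect (P k) then F k else set0))).
  move=> x [k Pk Fx]; exists k => //; by case: pselect.
apply: negligible_bigcup => k; case: pselect => Pk; first exact: H.
exact: negligible_set0.
Qed.

Theorem mainTheorem3 (d : measure_display) (X : measurableType d) (R : realType)
  (mu : {measure set X -> \bar R})
  (A : nat -> nat -> bool) (Rs Ds : nat -> set X)
  (hA : forall i, exists j, A i j)
  (hRm : forall j, measurable (Rs j)) (hDm : forall j, measurable (Ds j))
  (ha : forall i j, i <> j -> mu (Rs i `&` Rs j) = 0%E)
  (hb : ae_eq_set mu setT (\bigcup_j Rs j))
  (hc : forall i, ae_eq_set mu (Ds i) (\bigcup_(j in [set j | A i j]) Rs j)) :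
  (forall i j, (A i j = false -> mu (Rs j `&` Ds i) = 0%E) /\
               (A i j = true -> mu (Rs j `\` Ds i) = 0%E)) /\
  (forall U V : set nat, finite_set U -> finite_set V ->
     finite_set [set j | AUV A U V j] ->
     ae_eq_set mu (\bigcap_(u in U) Ds u `&` \bigcap_(v in V) ~` Ds v)
              (\bigcup_(j in [set j | AUV A U V j]) Rs j)).
Proof.
have mW : forall P : set nat, measurable (\bigcup_(j in P) Rs j).
  by move=> P; apply: bigcup_measurable => k _; exact: hRm.
have hcD : forall i, mu.-negligible (Ds i `\` \bigcup_(j in [set j | A i j]) Rs j).
  move=> i; apply/negligibleP; first by apply: measurableD.
  by case: (hc i).
have hcW : forall i, mu.-negligible ((\bigcup_(j in [set j | A i j]) Rs j) `\` Ds i).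
  move=> i; apply/negligibleP; first by apply: measurableD.
  by case: (hc i).
have P1 : forall i j, (A i j = false -> mu.-negligible (Rs j `&` Ds i)) /\
               (A i j = true -> mu.-negligible (Rs j `\` Ds i)).
  move=> i j; split => Aij.
    apply: (@negligibleS _ _ _ _ ((Ds i `\` \bigcup_(j in [set j | A i j]) Rs j)
       `|` \bigcup_(k in [set k | A i k]) (Rs j `&` Rs k))).
      move=> x [Rx Dx].
      case: (pselect ((\bigcup_(j in [set j | A i j]) Rs j) x)) => [[k Ak Rk]|nW].
        by right; exists k => //.
      by left.
    apply: negligibleU; first exact: hcD.
    apply: negl_cup => k /= Aik; apply/negligibleP; first by apply: measurableI.
    apply: ha => ejk; move: Aik; rewrite -ejk Aij //.
  apply: (negligibleS _ (hcW i)) => x [Rx nD]; split => //; by exists j.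
split.
  move=> i j; have [h1 h2] := P1 i j; split => Aij.
    by apply/negligibleP; [apply: measurableI | exact: h1].
  by apply/negligibleP; [apply: measurableD | exact: h2].
move=> U V _ _ _.
set S := (\bigcap_(u in U) Ds u `&` \bigcap_(v in V) ~` Ds v).
have mS : measurable S.
  apply: measurableI; apply: bigcap_measurableType => k _ //.
  exact: measurableC.
split.
- apply/negligibleP; first by apply: measurableD.
  apply: (@negligibleS _ _ _ _ ((setT `\` \bigcup_j Rs j) `|`
     \bigcup_k (Rs k `&` S `\` \bigcup_(j in [set j | AUV A U V j]) Rs j))).
    move=> x [Sx nW].
    case: (pselect ((\bigcup_j Rs j) x)) => [[k _ Rk]|nR].
      by right; exists k.
    by left.
  apply: negligibleU.
    apply/negligibleP; first by apply: measurableD => //; exact: (mW setT).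
    by case: hb.
  apply: negligible_bigcup => k.
  case: (pselect (AUV A U V k)) => Hk.
    apply: (@negligibleS _ _ _ _ set0); last exact: negligible_set0.
    by move=> x [[Rx _] nW]; apply: nW; exists k.
  have : (exists2 u, U u & A u k = false) \/ (exists2 v, V v & A v k = true).
    apply: contrapT => H; apply: Hk; split.
      move=> u Uu; apply: contrapT => Au; apply: H; left; exists u => //.
      by apply: negbTE; apply/negP.
    move=> v Vv; apply/negP => Av; apply: H; right; by exists v.
  case=> [[u Uu Auk]|[v Vv Avk]].
    apply: (negligibleS _ ((P1 u k).1 Auk)) => x [[Rx [Sx _]] _]; split => //.
    exact: Sx.
  apply: (negligibleS _ ((P1 v k).2 Avk)) => x [[Rx [_ Sx]] _]; split => //.
  exact: Sx.
- apply/negligibleP; first by apply: measurableD.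
  apply: (@negligibleS _ _ _ _ (\bigcup_(j in [set j | AUV A U V j])
     ((\bigcup_(u in U) (Rs j `\` Ds u)) `|` (\bigcup_(v in V) (Rs j `&` Ds v))))).
    move=> x [[j Hj Rx] nS]; exists j => //.
    case: (pselect (exists2 u, U u & ~ Ds u x)) => [[u Uu nD]|H1].
      by left; exists u.
    case: (pselect (exists2 v, V v & Ds v x)) => [[v Vv D]|H2].
      by right; exists v.
    exfalso; apply: nS; split.
      move=> u Uu; apply: contrapT => nD; apply: H1; by exists u.
    move=> v Vv Dv; apply: H2; by exists v.
  apply: negl_cup => j [HU HV]; apply: negligibleU.
    by apply: negl_cup => u Uu; apply: (P1 u j).2; apply: HU.
  apply: negl_cup => v Vv; apply: (P1 v j).1; apply: negbTE; exact: HV.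
Qed.
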